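(* Let $(\mathcal R,\tau)$ be a t-minimal Hausdorff geometric structure and $\mathcal S$ a lore of $(\mathcal R,\tau)$. Let $X$ be definable over $A$ and let $x\in X$ be generic over $A$. Then $x\in X^{lman}$.
   Context: A structure $\mathcal R$ is geometric if $\operatorname{acl}$ satisfies exchange and $\mathcal R$ eliminates $\exists^\infty$; $\dim$ denotes acl-dimension, and $a\in X$ is generic over $A$ if $\dim(a/A)=\dim(X)$. ''Definable'' allows parameters. Given a topology $\tau$ on $R$ (extended to definable subsets of $R^n$ by product and subspace topologies), $(\mathcal R,\tau)$ is a Hausdorff geometric structure if: (1) $\tau$ is Hausdorff; (2) $\mathcal R$ is geometric and $\aleph_1$-saturated; (3) if $X\subset R^n$ is $A$-definable and $a\in\overline{\overline X-X}$ then $\dim(a/A)<\dim(X)$; (4) if $X$ is definable over a countable $A$, $a\in X$ generic over $A$, and $B\supseteq A$ countable, every neighborhood of $a$ contains a generic of $X$ over $B$; (5) if $X,Y$, $Z\subset X\times Y$ are $A$-definable of the same dimension with both projections of $Z$ finite-to-one and $(x,y)\in Z$ generic over $A$, then $Z$ restricted to some $U\times V$ ($U\ni x$, $V\ni y$ open) is the graph of a homeomorphism $U\to V$. It is t-minimal if moreover $\tau$ has a basis given by the instances of a parameter-free formula, and $R$ has no isolated points. A lore is a collection $\mathcal S$ of definable sets (''loric sets'') such that: (i) $R$ and the diagonal of $R^2$ are loric, and loric sets are closed under finite products, finite intersections, coordinate permutations; (ii) if $f:X\to Y$ is a definable homeomorphism with $X$ and the graph of $f$ loric, then $Y$ is loric;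 (iii) definable open subsets of loric sets are loric, and a definable set with an open cover by loric sets is loric; (iv) every nonempty $A$-definable $X$ has a relatively open $A$-definable loric subset $X'$ with $\dim(X-X')<\dim(X)$. A loric map is a continuous function with loric graph; a loric homeomorphism is a loric map that is a homeomorphism. For a definable $X$ with $\dim(X)=n$, a point $x\in X$ is a loric manifold point if there is a definable relatively open $U$ with $x\in U\subset X$ that is lorically homeomorphic to an open subset of $R^n$; $X^{lman}$ is the set of loric manifold points of $X$. *)

(* Defs.v *)
From HB Require Import structures.
From mathcomp Require Import all_boot all_order fingroup perm.
From mathcomp Require Import boolp classical_sets cardinality topology function_spaces.
Import ArrowAsProduct.

Set Implicit Arguments.
Unset Strict Implicit.
Unset Printing Implicit Defensive.

Local Open Scope classical_set_scope.

Record fo_structure (R : Type) := FOStructure {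
  fo_sym : Type;
  fo_ar : fo_sym -> nat;
  fo_int : forall s : fo_sym, set ('I_(fo_ar s) -> R) }.

Inductive formula (sym : Type) (ar : sym -> nat) : Type :=
| FRel (s : sym) (v : 'I_(ar s) -> nat)
| FEq (i j : nat)
| FNot (phi : formula ar)
| FAnd (phi psi : formula ar)
| FEx (i : nat) (phi : formula ar).

Definition upd (R : Type) (e : nat -> R) (i : nat) (r : R) : nat -> R :=
  fun j => if j == i then r else e j.

Fixpoint sat (R : Type) (M : fo_structure R) (e : nat -> R)
  (phi : formula (@fo_ar R M)) {struct phi} : Prop :=
  match phi with
  | FRel s v => @fo_int R M s (fun k => e (v k))
  | FEq i j => e i = e j
  | FNot p => ~ @sat R M e p
  | FAnd p q => @sat R M e p /\ @sat R M e q
  | FEx i p => exists r, @sat R M (upd e i r) p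
  end.
Arguments sat {R} M e phi.

(* 0..n-1 are the coordinates, n..n+m-1 the parameters.                *)
Definition definable (R : Type) (M : fo_structure R) (A : set R) (n : nat)
  (X : set ('I_n -> R)) : Prop :=
  exists (phi : formula (@fo_ar R M)) (m : nat) (p : 'I_m -> R),
    (forall j, A (p j)) /\
    X = [set x | forall e : nat -> R,
                   (forall i : 'I_n, e i = x i) ->
                   (forall j : 'I_m, e (n + j)%N = p j) -> sat M e phi].

Definition catt (R : Type) (n m : nat) (x : 'I_n -> R) (y : 'I_m -> R)
  : 'I_(n + m) -> R :=
  fun i => match split i with inl j => x j | inr k => y k end.

Definition prodS (R : Type) (n m : nat) (X : set ('I_n -> R))
  (Y : set ('I_m -> R)) : set ('I_(n + m) -> R) :=
  [set z | exists a b, X a /\ Y b /\ z = catt a b].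

Definition graph (R : Type) (n m : nat) (X : set ('I_n -> R))
  (f : ('I_n -> R) -> ('I_m -> R)) : set ('I_(n + m) -> R) :=
  [set z | exists a, X a /\ z = catt a (f a)].

Definition pt1 (R : Type) (r : R) : 'I_1 -> R := fun _ => r.

Definition acl (R : Type) (M : fo_structure R) (A : set R) (b : R) : Prop :=
  exists Y : set ('I_1 -> R), definable M A Y /\ finite_set Y /\ Y (pt1 b).

Definition acl_indep (R : Type) (M : fo_structure R) (A : set R) (n : nat)
  (a : 'I_n -> R) (J : {set 'I_n}) : Prop :=
  forall i, i \in J -> ~ acl M (A `|` [set a j | j in [set j | j \in J :\ i]]) (a i).

Definition dimt (R : Type) (M : fo_structure R) (A : set R) (n : nat)
  (a : 'I_n -> R) : nat :=
  \max_(J : {set 'I_n} | `[< acl_indep M A a J >]) #|J|.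

(* dim(X): the maximum of dim(a/B) for a in X, B a (small=countable)   *)
(* parameter set over which X is definable (in an aleph_1-saturated    *)
(* structure this does not depend on B).  dimS set0 = 0 is only a      *)
(* convention; where the empty set matters it is treated separately.  *)
Definition dimS (R : Type) (M : fo_structure R) (n : nat)
  (X : set ('I_n -> R)) : nat :=
  \max_(k < n.+1 | `[< exists B : set R, countable B /\ definable M B X /\
                        exists a, X a /\ dimt M B a = k >]) k.

Definition generic (R : Type) (M : fo_structure R) (A : set R) (n : nat)
  (X : set ('I_n -> R)) (a : 'I_n -> R) : Prop :=
  X a /\ dimt M A a = dimS M X.

Definition acl_exchange (R : Type) (M : fo_structure R) : Prop :=
  forall (A : set R) (a b : R),
    acl M (A `|` [set a]) b -> ~ acl M A b -> acl M (A `|` [set b]) a.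

Definition elim_exists_infty (R : Type) (M : fo_structure R) : Prop :=
  forall (m : nat) (Y : set ('I_(1 + m) -> R)), definable M setT Y ->
    exists N : nat, forall b : 'I_m -> R,
      finite_set [set r | Y (catt (pt1 r) b)] ->
      exists f : 'I_N -> R, [set r | Y (catt (pt1 r) b)] `<=` range f.

Definition geometric (R : Type) (M : fo_structure R) : Prop :=
  acl_exchange M /\ elim_exists_infty M.

Definition aleph1_saturated (R : Type) (M : fo_structure R) : Prop :=
  forall F : nat -> set ('I_1 -> R),
    (forall k, definable M setT (F k)) ->
    (forall k, exists x, forall i, (i < k)%N -> F i x) ->
    exists x, forall i, F i x.

(* Topology: R^n carries the product topology of the topology of R.   *)

Definition relopen (T : topologicalType) (X U : set T) : Prop :=
  exists V, open V /\ U = X `&` V.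

Definition homeo (T U : topologicalType) (X : set T) (Y : set U)
  (f : T -> U) : Prop :=
  f @` X = Y /\ {within X, continuous f} /\
  exists g : U -> T, (forall a, X a -> g (f a) = a) /\ {within Y, continuous g}.

Section HGS.
Variable R : topologicalType.
Variable M : fo_structure R.

Definition HGS_closure_ax : Prop :=
  forall (n : nat) (A : set R) (X : set ('I_n -> R)) (a : 'I_n -> R),
    definable M A X -> closure (closure X `\` X) a ->
    (dimt M A a < dimS M X)%N.

Definition HGS_generic_ax : Prop :=
  forall (n : nat) (A B : set R) (X : set ('I_n -> R)) (a : 'I_n -> R),
    countable A -> definable M A X -> generic M A X a ->
    countable B -> A `<=` B ->
    forall U : set ('I_n -> R), open U -> U a ->
      exists a', U a' /\ generic M B X a'.

Definition HGS_homeo_ax : Prop :=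
  forall (n m : nat) (A : set R) (X : set ('I_n -> R)) (Y : set ('I_m -> R))
    (Z : set ('I_(n + m) -> R)),
    definable M A X -> definable M A Y -> definable M A Z ->
    Z `<=` prodS X Y ->
    dimS M X = dimS M Y -> dimS M Y = dimS M Z ->
    (forall a, finite_set [set b | Z (catt a b)]) ->
    (forall b, finite_set [set a | Z (catt a b)]) ->
    forall a b, generic M A Z (catt a b) ->
      exists (U : set ('I_n -> R)) (V : set ('I_m -> R))
             (f : ('I_n -> R) -> ('I_m -> R)),
        [/\ open U /\ U a, open V /\ V b,
            homeo (X `&` U) (Y `&` V) f &
            Z `&` prodS U V = graph (X `&` U) f].

Definition hausdorff_geometric : Prop :=
  [/\ hausdorff_space R, geometric M /\ aleph1_saturated M,
      HGS_closure_ax, HGS_generic_ax & HGS_homeo_ax].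

Definition t_minimal : Prop :=
  hausdorff_geometric /\
  (exists (m : nat) (B : set ('I_(1 + m) -> R)),
     definable M set0 B /\
     (forall b : 'I_m -> R, open [set r | B (catt (pt1 r) b)]) /\
     (forall (U : set R) (r : R), open U -> U r ->
        exists b : 'I_m -> R, B (catt (pt1 r) b) /\
                              [set r' | B (catt (pt1 r') b)] `<=` U)) /\
  (forall r : R, ~ open [set r]).

Definition lore (S : forall n : nat, set (set ('I_n -> R))) : Prop :=
  (forall n X, S n X -> definable M setT X) /\
  S 1%N setT /\ S 2%N [set x | x ord0 = x ord_max] /\
  (forall n m (X : set ('I_n -> R)) (Y : set ('I_m -> R)),
     S n X -> S m Y -> S (n + m)%N (prodS X Y)) /\
  (forall n (X Y : set ('I_n -> R)), S n X -> S n Y -> S n (X `&` Y)) /\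
  (forall n (s : {perm 'I_n}) (X : set ('I_n -> R)),
     S n X -> S n [set x | X (fun i => x (s i))]) /\
  (forall n m (X : set ('I_n -> R)) (Y : set ('I_m -> R))
     (f : ('I_n -> R) -> ('I_m -> R)),
     S n X -> S (n + m)%N (graph X f) -> homeo X Y f -> S m Y) /\
  (forall n (X U : set ('I_n -> R)),
     S n X -> definable M setT U -> relopen X U -> S n U) /\
  (forall n (X : set ('I_n -> R)), definable M setT X ->
     (forall x, X x -> exists U, relopen X U /\ U x /\ S n U) -> S n X) /\
  (forall n (A : set R) (X : set ('I_n -> R)), definable M A X -> X !=set0 ->
     exists X', [/\ definable M A X', S n X', relopen X X' &
                    (X `\` X' = set0 \/ (dimS M (X `\` X') < dimS M X)%N)]).

Definition lman_point (S : forall n : nat, set (set ('I_n -> R))) (n : nat)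
  (X : set ('I_n -> R)) (x : 'I_n -> R) : Prop :=
  X x /\
  exists (U : set ('I_n -> R)) (W : set ('I_(dimS M X) -> R))
         (f : ('I_n -> R) -> ('I_(dimS M X) -> R)),
    [/\ definable M setT U, relopen X U /\ U x, open W,
        homeo U W f & S (n + dimS M X)%N (graph U f)].

End HGS.

(* Main.v *)
Require Import Defs.
From mathcomp Require Import all_boot all_order fingroup perm.
From mathcomp Require Import boolp classical_sets cardinality topology function_spaces.
From mathcomp Require Import zify.
From Stdlib Require Import Lia.
Import ArrowAsProduct.

Set Implicit Arguments.
Unset Strict Implicit.
Unset Printing Implicit Defensive.
Local Open Scope classical_set_scope.
Section FOL.
Variable (R : Type) (M : fo_structure R).
Local Notation form := (formula (@fo_ar R M)).
Local Notation feq := (@FEq _ (@fo_ar R M)).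

Fixpoint vb (phi : form) : nat :=
  match phi with
  | FRel s v => \max_(k < fo_ar s) (v k).+1
  | FEq i j => (maxn i j).+1
  | FNot p => vb p
  | FAnd p q => maxn (vb p) (vb q)
  | FEx i p => maxn i.+1 (vb p)
  end.

Lemma sat_coinc (phi : form) (e e' : nat -> R) :
  (forall v, v < vb phi -> e v = e' v) -> sat M e phi <-> sat M e' phi.
Proof.
elim: phi e e' => [s v|i j|p IH|p IHp q IHq|i p IH] e e' /= H.
- have -> : (fun k => e (v k)) = (fun k => e' (v k)); last by [].
  apply: funext => k; apply: H; exact: (@leq_bigmax _ (fun k => (v k).+1) k).
- rewrite H ?H //; by rewrite ltnS ?leq_maxl ?leq_maxr.
- by rewrite (IH e e').
- rewrite (IHp e e') ?(IHq e e') // => w hw; apply: H;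
  by apply: leq_trans hw _; rewrite ?leq_maxl ?leq_maxr.
- have E r : sat M (upd e i r) p <-> sat M (upd e' i r) p.
    apply: IH => w hw; rewrite /upd; case: eqP => // _; apply: H.
    apply: leq_trans hw _; exact: leq_maxr.
  by split=> -[r /E hr]; exists r.
Qed.

Fixpoint ren (sg : nat -> nat) (phi : form) : form :=
  match phi with
  | FRel s v => @FRel _ _ s (fun k => sg (v k))
  | FEq i j => feq (sg i) (sg j)
  | FNot p => FNot (ren sg p)
  | FAnd p q => FAnd (ren sg p) (ren sg q)
  | FEx i p => FEx (sg i) (ren sg p)
  end.

Lemma sat_ren (sg : nat -> nat) (phi : form) (e : nat -> R) :
  injective sg -> sat M e (ren sg phi) <-> sat M (e \o sg) phi.
Proof.
move=> isg; elim: phi e => [s v|i j|p IH|p IHp q IHq|i p IH] e //=.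
- by rewrite IH.
- by rewrite IHp IHq.
- have E r : upd e (sg i) r \o sg = upd (e \o sg) i r.
    by apply: funext => w; rewrite /upd /= inj_eq.
  by split=> -[r hr]; exists r; move: hr; rewrite IH E.
Qed.

Definition fall (v : nat) (p : form) : form := FNot (FEx v (FNot p)).

Definition foralls (l : seq nat) (phi : form) : form := foldr fall phi l.
Definition exs (l : seq nat) (phi : form) : form := foldr (@FEx _ _) phi l.

Lemma sat_foralls l phi e : sat M e (foralls l phi) <->
  forall e', (forall v, v \notin l -> e' v = e v) -> sat M e' phi.
Proof.
elim: l e => [|v l IH] e /=.
  split; first by move=> h e' he; have -> : e' = e by apply: funext=> w; exact: he.
  by move=> /(_ e) ; apply.
split.
- move=> h e' he; apply: contrapT => ne; apply: h; exists (e' v).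
  rewrite IH => h2; apply: ne; apply: h2 => w hw; rewrite /upd; case: eqP => [->//|nw].
  by apply: he; rewrite inE negb_or hw andbT; apply/eqP.
- move=> h [r]; apply; rewrite IH => e' he; apply: h => w.
  rewrite inE negb_or => /andP[/eqP nw hw]; rewrite he // /upd; by case: eqP.
Qed.

Lemma sat_exs l phi e : sat M e (exs l phi) <->
  exists e', (forall v, v \notin l -> e' v = e v) /\ sat M e' phi.
Proof.
elim: l e => [|v l IH] e /=.
  split; first by move=> h; exists e.
  by move=> [e' [he h]]; have <- : e' = e by apply: funext=> w; exact: he.
split.
- move=> [r]; rewrite IH => -[e' [he h]]; exists e'; split=> // w.
  rewrite inE negb_or => /andP[/eqP nw hw]; rewrite he // /upd; by case: eqP.
- move=> [e' [he h]]; exists (e' v); rewrite IH; exists e'; split=> // w hw.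
  rewrite /upd; case: eqP => [->//|nw].
  by apply: he; rewrite inE negb_or hw andbT; apply/eqP.
Qed.

Definition ftrue : form := feq 0 0.
Definition bigand (l : seq form) : form := foldr (@FAnd _ _) ftrue l.

Lemma sat_bigand (f : nat -> form) (l : seq nat) e :
  sat M e (bigand [seq f i | i <- l]) <-> forall i, i \in l -> sat M e (f i).
Proof.
elim: l => [|p l IH] /=; first by split.
rewrite IH; split.
- by move=> [h1 h2] q; rewrite inE => /orP[/eqP->//|]; exact: h2.
- by move=> h; split; [apply: h; rewrite inE eqxx | move=> q hq; apply: h; rewrite inE hq orbT].
Qed.

Definition FD (P : (nat -> R) -> Prop) := exists phi : form, forall e, P e <-> sat M e phi.

Lemma FD_ext P Q : (forall e, P e <-> Q e) -> FD P -> FD Q.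
Proof. by move=> h [phi hp]; exists phi => e; rewrite -h. Qed.

Lemma FD_true : FD (fun _ => True).
Proof. by exists ftrue. Qed.

Lemma FD_eq i j : FD (fun e => e i = e j).
Proof. by exists (feq i j). Qed.

Lemma FD_not P : FD P -> FD (fun e => ~ P e).
Proof. by move=> [phi h]; exists (FNot phi) => e /=; rewrite h. Qed.

Lemma FD_and P Q : FD P -> FD Q -> FD (fun e => P e /\ Q e).
Proof. by move=> [p hp] [q hq]; exists (FAnd p q) => e /=; rewrite hp hq. Qed.

Lemma FD_or P Q : FD P -> FD Q -> FD (fun e => P e \/ Q e).
Proof.
move=> hP hQ; apply: FD_ext (FD_not (FD_and (FD_not hP) (FD_not hQ))) => e.
split; last by move=> [h|h] [h1 h2].
by move=> h; apply: contrapT => nh; apply: h; split => ?; apply: nh; [left|right].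
Qed.

Lemma FD_imp P Q : FD P -> FD Q -> FD (fun e => P e -> Q e).
Proof.
move=> hP hQ; apply: FD_ext (FD_or (FD_not hP) hQ) => e.
split; first by move=> [h|h] // /h.
by move=> h; have [/h|] := pselect (P e); [right|left].
Qed.

Lemma FD_subst P (sg : nat -> nat) : FD P -> FD (fun e => P (e \o sg)).
Proof.
move=> [phi hp]; set K := vb phi.
set W := K + \max_(i < K) (sg i).+1.
have sgW i : i < K -> sg i < W.
  move=> iK; apply: (@leq_trans (\max_(i < K) (sg i).+1)); last exact: leq_addl.
  exact: (@leq_bigmax _ (fun i : 'I_K => (sg i).+1) (Ordinal iK)).
exists (exs (iota W K) (FAnd (bigand [seq feq (W + i) (sg i) | i <- iota 0 K])
                            (ren (addn W) phi))) => e.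
rewrite sat_exs; split.
- move=> h; pose e' v := if (W <= v < W + K) then e (sg (v - W)) else e v.
  exists e'; split.
    by move=> v; rewrite mem_iota /e' => /negbTE ->.
  split.
    apply/sat_bigand => i; rewrite mem_iota add0n => /andP[_ iK] /=.
    rewrite /e' leq_addr ltn_add2l iK addKn /=.
    by have := sgW _ iK; rewrite ltnNge => /negbTE ->.
  apply/sat_ren; first exact: addnI.
  rewrite -(sat_coinc (e := e \o sg)) -?hp // => v vK /=.
  by rewrite /e' leq_addr ltn_add2l vK addKn.
- move=> [e' [he [/sat_bigand hq /sat_ren]]] => /(_ (@addnI W)) hs.
  rewrite hp; rewrite -(sat_coinc (e := e' \o addn W)) // => v vK /=.
  have := hq v; rewrite mem_iota add0n vK => /(_ isT) /= ->.
  apply: he; by rewrite mem_iota leqNgt sgW.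
Qed.

Lemma FD_lock P L : FD P ->
  FD (fun e => forall e', (forall v, v < L -> e' v = e v) -> P e').
Proof.
move=> [phi hp]; set K := vb phi.
exists (foralls (iota L (K - L)) phi) => e; rewrite sat_foralls; split.
- move=> h e' he; rewrite -hp; apply: h => v vL; apply: he.
  by rewrite mem_iota leqNgt vL.
- move=> h e' he; pose e'' v := if v < K then e' v else e v.
  have : sat M e'' phi.
    apply: h => v; rewrite mem_iota => hv; rewrite /e''; case: ifP => // vK.
    apply: he; move: hv; case: (leqP L v) => //= Lv.
    by rewrite subnKC ?vK // ltnW // (leq_ltn_trans Lv).
  by rewrite hp (sat_coinc (e' := e')) // => v vK; rewrite /e'' vK.
Qed.

Lemma FD_exlock P L : FD P ->
  FD (fun e => exists e', (forall v, v < L -> e' v = e v) /\ P e').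
Proof.
move=> h; apply: FD_ext (FD_not (FD_lock L (FD_not h))) => e; split.
- move=> nh; apply: contrapT => ne; apply: nh => e' he pe; apply: ne; by exists e'.
- by move=> [e' [he pe]] h2; exact: h2 he pe.
Qed.

End FOL.
Lemma I0_False (i : 'I_0) : False. Proof. by case: i. Qed.

Lemma cattL (T : Type) n m (a : 'I_n -> T) (b : 'I_m -> T) i :
  catt a b (lshift m i) = a i.
Proof. by rewrite /catt (unsplitK (inl i)). Qed.

Lemma cattR (T : Type) n m (a : 'I_n -> T) (b : 'I_m -> T) j :
  catt a b (rshift n j) = b j.
Proof. by rewrite /catt (unsplitK (inr j)). Qed.

Lemma catt_inj (T : Type) n m (a a' : 'I_n -> T) (b b' : 'I_m -> T) :
  catt a b = catt a' b' -> a = a' /\ b = b'.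
Proof.
move=> h; split; apply: funext => i.
  by rewrite -(cattL a b) h cattL.
by rewrite -(cattR a b) h cattR.
Qed.

Lemma catt_eta (T : Type) n m (z : 'I_(n + m) -> T) :
  z = catt (fun i => z (lshift m i)) (fun j => z (rshift n j)).
Proof.
apply: funext => u; rewrite /catt; case: splitP => [i hi|j hj]; congr z; exact: val_inj.
Qed.

Lemma below_split k m v : v < k + m ->
  (exists i : 'I_k, v = i) \/ (exists j : 'I_m, v = k + j).
Proof.
move=> h; case: (ltnP v k) => hv; first by left; exists (Ordinal hv).
right; have hj : v - k < m by rewrite ltn_subLR.
by exists (Ordinal hj); rewrite /= subnKC.
Qed.

Section DefS.
Variable (R : Type) (M : fo_structure R).

Definition agree k m (x : 'I_k -> R) (p : 'I_m -> R) (e : nat -> R) :=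
  (forall i : 'I_k, e i = x i) /\ (forall j : 'I_m, e (k + j) = p j).

Definition loc L (P : (nat -> R) -> Prop) :=
  forall e e', (forall v, v < L -> e v = e' v) -> P e -> P e'.

Definition Def (A : set R) k (X : set ('I_k -> R)) :=
  exists m (p : 'I_m -> R) (P : (nat -> R) -> Prop),
    [/\ FD M P, loc (k + m) P, (forall j, A (p j)) &
        forall x e, agree x p e -> (X x <-> P e)].

Definition mkenv (r0 : R) k m (x : 'I_k -> R) (p : 'I_m -> R) (v : nat) : R :=
  match (insub v : option 'I_k) with
  | Some i => x i
  | None => match (insub (v - k) : option 'I_m) with Some j => p j | None => r0 end
  end.

Lemma agree_mkenv r0 k m (x : 'I_k -> R) (p : 'I_m -> R) : agree x p (mkenv r0 x p).
Proof.
split.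
- move=> i; rewrite /mkenv; case: insubP => [i' _ hi|]; last by rewrite ltn_ord.
  by congr x; apply: val_inj.
- move=> j; rewrite /mkenv; case: insubP => [i' hi _|_]; first by move: hi; rewrite ltnNge leq_addr.
  rewrite addKn; case: insubP => [j' _ hj|]; last by rewrite ltn_ord.
  by congr p; apply: val_inj.
Qed.

Lemma agree_ext k m (x : 'I_k -> R) (p : 'I_m -> R) e e' :
  agree x p e -> (forall v, v < k + m -> e v = e' v) -> agree x p e'.
Proof.
move=> [h1 h2] h; split.
- by move=> i; rewrite -h1 h // ltn_addr.
- by move=> j; rewrite -h2 h // ltn_add2l.
Qed.

Lemma agree_below k m (x : 'I_k -> R) (p : 'I_m -> R) e e' :
  agree x p e -> agree x p e' -> forall v, v < k + m -> e v = e' v.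
Proof.
move=> [h1 h2] [h1' h2'] v /below_split [[i ->]|[j ->]].
  by rewrite h1 h1'.
by rewrite h2 h2'.
Qed.

Lemma Def_definable (r0 : R) A k (X : set ('I_k -> R)) : Def A X -> definable M A X.
Proof.
move=> [m [p [P [[phi hphi] locP pA spec]]]].
exists phi, m, p; split => //; apply/funext => x; apply/propext; split.
- move=> Xx e h1 h2; rewrite -hphi -(spec x e) //; exact: conj h1 h2.
- move=> h; rewrite (spec x (mkenv r0 x p)); last exact: agree_mkenv.
  by rewrite hphi; case: (agree_mkenv r0 x p) => h1 h2; exact: h.
Qed.

Lemma definable_Def A k (X : set ('I_k -> R)) : definable M A X -> Def A X.
Proof.
move=> [phi [m [p [pA ->]]]].
exists m, p, (fun e => forall e', (forall v, v < k + m -> e' v = e v) -> sat M e' phi).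
split => //.
- by apply: FD_lock; exists phi.
- move=> e e' h he e'' h'; apply: he => v hv; rewrite h' // h //.
- move=> x e hag; split.
  + move=> h e' he'; have [h1 h2] := agree_ext hag (fun v hv => esym (he' v hv)).
    exact: h.
  + move=> h e' h1 h2; apply: h => v hv.
    by apply: (agree_below (conj h1 h2) hag).
Qed.

Lemma definable_small A k (X : set ('I_k -> R)) : definable M A X ->
  exists A0, [/\ countable A0, A0 `<=` A & definable M A0 X].
Proof.
move=> [phi [m [p [pA ->]]]]; exists (range p); split.
- apply: finite_set_countable; apply: finite_image; exact: finite_finset.
- by move=> _ [j _ <-]; exact: pA.
- by exists phi, m, p; split => // j; exists j.
Qed.

Lemma definable_mono A B k (X : set ('I_k -> R)) : A `<=` B ->
  definable M A X -> definable M B X.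
Proof. by move=> AB [phi [m [p [pA ->]]]]; exists phi, m, p; split => // j; apply: AB. Qed.

Lemma Def_mono A B k (X : set ('I_k -> R)) : A `<=` B -> Def A X -> Def B X.
Proof. by move=> AB [m [p [P [h1 h2 h3 h4]]]]; exists m, p, P; split => // j; apply: AB. Qed.

Lemma Def_ext A k (X Y : set ('I_k -> R)) : (forall y, X y <-> Y y) -> Def A X -> Def A Y.
Proof.
move=> XY [m [p [P [h1 h2 h3 h4]]]]; exists m, p, P; split => // x e he.
by rewrite -XY; exact: h4.
Qed.

Lemma Def_setT A k : Def A [set: 'I_k -> R].
Proof.
exists 0, (fun i => False_rect R (I0_False i)), (fun _ => True); split => //.
- exact: FD_true.
- by move=> j; case: (I0_False j).
Qed.

Lemma Def_C A k (X : set ('I_k -> R)) : Def A X -> Def A (~` X).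
Proof.
move=> [m [p [P [h1 h2 h3 h4]]]]; exists m, p, (fun e => ~ P e); split => //.
- exact: FD_not.
- move=> e e' h ne pe; apply: ne; apply: (h2 e') => // v hv; rewrite h //.
- by move=> x e he /=; rewrite (h4 x e he).
Qed.

Lemma Def_I A k (X Y : set ('I_k -> R)) : Def A X -> Def A Y -> Def A (X `&` Y).
Proof.
move=> [m1 [p1 [P1 [f1 l1 a1 s1]]]] [m2 [p2 [P2 [f2 l2 a2 s2]]]].
pose sg v := if v < k then v else v + m1.
exists (m1 + m2), (catt p1 p2), (fun e => P1 e /\ P2 (e \o sg)); split.
- by apply: FD_and => //; exact: FD_subst.
- move=> e e' h [hp1 hp2]; split.
    apply: (l1 e) => // v hv; apply: h; rewrite addnA; exact: ltn_addr.
  apply: (l2 (e \o sg)) => // v hv; apply: h; rewrite /sg; case: ifP => vk.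
    by apply: (leq_trans vk); exact: leq_addr.
  by rewrite addnCA (addnC v) ltn_add2l.
- by move=> j; rewrite /catt; case: split => [a|b]; [apply: a1|apply: a2].
- move=> x e [he1 he2]; rewrite /setI /=; rewrite (s1 x e) ?(s2 x (e \o sg)) //.
  + split => [i|j] /=; rewrite /sg /=.
      by rewrite ltn_ord he1.
    rewrite ltnNge leq_addr /= -addnA (addnC j) .
    by have := he2 (rshift m1 j); rewrite /= cattR.
  + split => // j; by have := he2 (lshift m2 j); rewrite /= cattL.
Qed.

Lemma Def_D A k (X Y : set ('I_k -> R)) : Def A X -> Def A Y -> Def A (X `\` Y).
Proof. by move=> hX hY; apply: Def_I => //; exact: Def_C. Qed.

Lemma Def_eq A k (i j : 'I_k) : Def A [set y | y i = y j].
Proof.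
exists 0, (fun i => False_rect R (I0_False i)), (fun e => e i = e j); split => //.
- exact: FD_eq.
- move=> e e' h; rewrite !h // ltn_addr //.
- by move=> t; case: (I0_False t).
- by move=> x e [h1 _] /=; rewrite !h1.
Qed.

Lemma agree_catt l m2 m (y : 'I_l -> R) (q : 'I_m2 -> R) (p : 'I_m -> R) e :
  agree y (catt q p) e -> forall u : 'I_(l + m2), e u = catt y q u.
Proof.
move=> [h1 h2] u; rewrite /catt; case: splitP => [a ha|t ht].
  by rewrite ha h1.
by rewrite ht; have := h2 (lshift m t); rewrite /= cattL.
Qed.

Lemma Def_pre A k l m2 (X : set ('I_k -> R)) (h : 'I_k -> 'I_(l + m2))
  (q : 'I_m2 -> R) : (forall t, A (q t)) -> Def A X ->
  Def A [set y | X (fun i => catt y q (h i))].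
Proof.
move=> qA [m [p [P [f1 l1 a1 s1]]]].
pose sg v := match (insub v : option 'I_k) with
  | Some i => nat_of_ord (h i) | None => v - k + (l + m2) end.
have sgi (i : 'I_k) : sg i = h i.
  rewrite /sg; case: insubP => [i' _ hi|]; last by rewrite ltn_ord.
  by congr (nat_of_ord (h _)); apply: val_inj.
have sgj (j : 'I_m) : sg (k + j) = j + (l + m2).
  rewrite /sg; case: insubP => [i' hi _|_]; first by move: hi; rewrite ltnNge leq_addr.
  by rewrite addKn.
exists (m2 + m), (catt q p), (fun e => P (e \o sg)); split.
- exact: FD_subst.
- move=> e e' he; apply: l1 => v /below_split [[i ->]|[j ->]] /=; apply: he.
    rewrite sgi; apply: (leq_trans (ltn_ord (h i))); rewrite addnA; exact: leq_addr.
  rewrite sgj; have := ltn_ord j; lia.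
- by move=> j; rewrite /catt; case: split => [a|b]; [apply: qA|apply: a1].
- move=> y e he; rewrite /= (s1 _ (e \o sg)) //; split => [i|j] /=.
    by rewrite sgi (agree_catt he).
  rewrite sgj; case: he => _ he; have := he (rshift m2 j); rewrite /= cattR.
  by have -> : j + (l + m2) = l + (m2 + j) by lia.
Qed.

Lemma Def_pre2 A k l (X : set ('I_k -> R)) (c : 'I_k -> 'I_l + R) :
  (forall i a, c i = inr a -> A a) -> Def A X ->
  Def A [set y | X (fun i => match c i with inl j => y j | inr a => a end)].
Proof.
move=> cA hX; have [[a0 Aa0]|nA] := pselect (exists a, A a).
- pose q i := match c i with inl _ => a0 | inr a => a end.
  pose h i := match c i with inl j => lshift k j | inr _ => rshift l i end.
  have qA t : A (q t) by rewrite /q; case E: (c t) => [//|a]; exact: cA E.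
  apply: Def_ext (Def_pre h qA hX) => y /=.
  have -> : (fun i => catt y q (h i)) =
       (fun i => match c i with inl j => y j | inr a => a end); last by [].
  apply: funext => i; rewrite /h /q; case E: (c i) => [j|a].
    by rewrite cattL.
  by rewrite cattR E.
- have hc i : exists j, c i = inl j.
    case E: (c i) => [j|a]; first by exists j.
    by case: nA; exists a; exact: cA E.
  have [g hg] := choice hc.
  pose q := fun i : 'I_0 => False_rect R (I0_False i).
  have qA t : A (q t) by case: (I0_False t).
  apply: Def_ext (Def_pre (fun i => lshift 0 (g i)) qA hX) => y /=.
  have -> : (fun i => catt y q (lshift 0 (g i))) =
       (fun i => match c i with inl j => y j | inr a => a end); last by [].
  by apply: funext => i; rewrite hg cattL.
Qed.

Lemma Def_bigcap A k (I : finType) (X : I -> set ('I_k -> R)) :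
  (forall t, Def A (X t)) -> Def A [set y | forall t, X t y].
Proof.
move=> hX.
have : forall s : seq I, Def A [set y | forall t, t \in s -> X t y].
  elim => [|t s IH].
    by apply: Def_ext (Def_setT A k) => y; split.
  apply: Def_ext (Def_I (hX t) IH) => y; split.
    by move=> [h1 h2] u; rewrite inE => /orP[/eqP->//|]; exact: h2.
  by move=> h; split; [apply: h; rewrite inE eqxx| move=> u hu; apply: h; rewrite inE hu orbT].
move=> /(_ (enum I)) h; apply: Def_ext h => y; split.
  by move=> h t; apply: h; rewrite mem_enum.
by move=> h t _; exact: h.
Qed.

Lemma Def_ex (r0 : R) A k N (X : set ('I_(k + N) -> R)) : Def A X ->
  Def A [set y | exists w : 'I_N -> R, X (catt y w)].
Proof.
move=> [m [p [P [f1 l1 a1 s1]]]].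
pose tau v := if v < k then v else if v < k + N then v + m else v - N.
exists m, p, (fun e => exists e', (forall v, v < k + m -> e' v = e v) /\ P (e' \o tau)).
split => //.
- by apply: FD_exlock; exact: FD_subst.
- move=> e e' h [e'' [h1 h2]]; exists e''; split => // v hv; rewrite h1 // h //.
- move=> y e [he1 he2]; split.
  + move=> [w Xw].
    pose e' v := if v < k + m then e v else
                 match (insub (v - (k + m)) : option 'I_N) with Some s => w s | None => r0 end.
    exists e'; split; first by move=> v hv; rewrite /e' hv.
    have hag : agree (catt y w) p (e' \o tau).
      split => [u|j] /=.
      * rewrite /catt; case: splitP => [i ->|s ->]; rewrite /tau.
          by rewrite ltn_ord /e' ltn_addr // he1.
        have -> : (k + s < k) = false by lia.
        have -> : (k + s < k + N) = true by have := ltn_ord s; lia.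
        rewrite /e'; have -> : (k + s + m < k + m) = false by lia.
        have -> : k + s + m - (k + m) = s by lia.
        case: insubP => [s' _ hs'|]; last by rewrite ltn_ord.
        by congr w; apply: val_inj.
      * rewrite /tau; have -> : (k + N + j < k) = false by lia.
        have -> : (k + N + j < k + N) = false by lia.
        have -> : k + N + j - N = k + j by lia.
        by rewrite /e' ltn_add2l ltn_ord he2.
    by rewrite -(s1 _ _ hag).
  + move=> [e' [h1 h2]]; exists (fun s => e' (k + m + s)).
    have hag : agree (catt y (fun s : 'I_N => e' (k + m + s))) p (e' \o tau).
      split => [u|j] /=.
      * rewrite /catt; case: splitP => [i ->|s ->]; rewrite /tau.
          by rewrite ltn_ord h1 ?ltn_addr // he1.
        have -> : (k + s < k) = false by lia.
        have -> : (k + s < k + N) = true by have := ltn_ord s; lia.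
        by congr e'; lia.
      * rewrite /tau; have -> : (k + N + j < k) = false by lia.
        have -> : (k + N + j < k + N) = false by lia.
        have -> : k + N + j - N = k + j by lia.
        by rewrite h1 ?ltn_add2l // he2.
    by rewrite (s1 _ _ hag).
Qed.

End DefS.
Lemma bigmax_attained (I : finType) (P : pred I) (F : I -> nat) i0 : P i0 ->
  exists i, P i /\ \max_(j | P j) F j = F i.
Proof.
move=> Pi0; have h : 0 < #|P| by apply/card_gt0P; exists i0.
have [i Pi E] := eq_bigmax_cond F h; exists i; split => //.
Qed.

Section Dim.
Variable (R : Type) (M : fo_structure R).

Lemma acl_mono A B b : A `<=` B -> acl M A b -> acl M B b.
Proof. by move=> AB [Y [dY [fY Yb]]]; exists Y; split => //; exact: definable_mono dY. Qed.

Lemma acl_mem A b : A b -> acl M A b.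
Proof.
move=> Ab; exists [set pt1 b]; split; last by split; [exact: finite_set1|].
pose c (i : 'I_2) : 'I_1 + R := if i == ord0 then inl ord0 else inr b.
have cA i a : c i = inr a -> A a by rewrite /c; case: ifP => // _ [<-].
have := Def_pre2 cA (@Def_eq R M A 2 ord0 (Ordinal (isT : 1 < 2))).
move=> /(Def_ext (Y := [set pt1 b])) h; apply: (Def_definable b); apply: h => y /=.
rewrite /c /=; split => [h|->] //; apply: funext => i; by rewrite (ord1 i) h.
Qed.

Lemma indep_anti A B k (a : 'I_k -> R) J : A `<=` B -> acl_indep M B a J -> acl_indep M A a J.
Proof.
move=> AB h i iJ hacl; apply: (h i iJ); apply: acl_mono hacl.
by move=> r [Ar|Sr]; [left; exact: AB|right].
Qed.

Lemma dimt_indep A k (a : 'I_k -> R) J : acl_indep M A a J -> #|J| <= dimt M A a.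
Proof.
move=> h; rewrite /dimt; apply: (leq_bigmax_cond (P := fun J => `[< acl_indep M A a J >])).
exact/asboolP.
Qed.

Lemma dimt_attained A k (a : 'I_k -> R) :
  exists J, acl_indep M A a J /\ #|J| = dimt M A a.
Proof.
have h0 : `[< acl_indep M A a (finset.set0 : {set 'I_k}) >] by apply/asboolP => i; rewrite inE.
have [J [/asboolP hJ E]] := bigmax_attained (P := fun J => `[< acl_indep M A a J >]) (fun J : {set 'I_k} => #|J|) h0.
by exists J; split => //; rewrite /dimt E.
Qed.

Lemma dimt_le A k (a : 'I_k -> R) : dimt M A a <= k.
Proof.
rewrite /dimt; apply/bigmax_leqP => J _; by rewrite (leq_trans (max_card _)) // card_ord.
Qed.

Lemma dimt_anti A B k (a : 'I_k -> R) : A `<=` B -> dimt M B a <= dimt M A a.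
Proof.
move=> AB; rewrite /dimt; apply/bigmax_leqP => J /asboolP hJ.
by apply: dimt_indep; exact: indep_anti hJ.
Qed.

Lemma indep_inj A k (a : 'I_k -> R) J i i' : acl_indep M A a J ->
  i \in J -> i' \in J -> a i = a i' -> i = i'.
Proof.
move=> h iJ i'J E; apply: contrapT => ne; apply: (h i iJ); apply: acl_mem.
right; exists i'; last by rewrite E.
by rewrite /= !inE i'J andbT; apply/eqP => e; apply: ne.
Qed.

Lemma indep_transfer A k l (a : 'I_k -> R) (b : 'I_l -> R) (rho : 'I_k -> 'I_l) (J : {set 'I_k}) :
  (forall i, i \in J -> a i = b (rho i)) -> {in J &, injective rho} ->
  acl_indep M A a J -> acl_indep M A b (rho @: J) /\ #|rho @: J| = #|J|.
Proof.
move=> hab hinj h; split; last exact: card_in_imset.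
move=> i' /imsetP [i iJ ->]; rewrite -hab // => hacl; apply: (h i iJ).
apply: acl_mono hacl => r [Ar|[j' /= hj' <-]]; first by left.
right; move: hj'; rewrite !inE => /andP [ne /imsetP [j jJ E]]; subst j'.
exists j; last by rewrite hab.
by rewrite /= !inE jJ andbT; apply/eqP => E; move: ne; rewrite E eqxx.
Qed.

Lemma dimt_max_acl A k (a : 'I_k -> R) J i : acl_exchange M ->
  acl_indep M A a J -> #|J| = dimt M A a -> i \notin J ->
  acl M (A `|` [set a j | j in [set j | j \in J]]) (a i).
Proof.
move=> hex hJ cJ iJ; apply: contrapT => nacl.
suff : acl_indep M A a (i |: J).
  move=> /dimt_indep; rewrite cardsU1 iJ cJ /=; by rewrite ltnn.
move=> t; rewrite !inE => /orP [/eqP ->|tJ].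
- move=> hacl; apply: nacl; apply: acl_mono hacl => r [Ar|[j /= hj <-]]; first by left.
  right; exists j => //; move: hj; rewrite /= !inE => /andP[ji /orP[/eqP eji|//]].
  by move: ji; rewrite eji eqxx.
- have ti : t != i by apply: contra iJ => /eqP <-.
  pose A' := A `|` [set a j | j in [set j | j \in J :\ t]].
  have nA' : ~ acl M A' (a t) by exact: hJ.
  move=> hacl.
  have h1 : acl M (A' `|` [set a i]) (a t).
    apply: acl_mono hacl => r [Ar|[j /= hj <-]]; first by left; left.
    move: hj; rewrite !inE => /andP [jt /orP[/eqP ->|jJ]]; first by right.
    by left; right; exists j => //=; rewrite !inE jt jJ.
  have h2 := hex _ _ _ h1 nA'; apply: nacl; apply: acl_mono h2.
  move=> r [[Ar|[j /= hj <-]]|->]; first by left.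
    by right; exists j => //; move: hj; rewrite /= !inE => /andP[].
  by right; exists t.
Qed.

End Dim.
Lemma countableU (T : Type) (A B : set T) : countable A -> countable B -> countable (A `|` B).
Proof.
move=> cA cB.
have -> : A `|` B = \bigcup_(i in [set: bool]) (if i then A else B).
  apply/seteqP; split => [r [Ar|Br]|r [[] _ h]]; [by exists true|by exists false|by left|by right].
by apply: bigcup_countable => // -[].
Qed.

Section DimS.
Variable (R : topologicalType) (M : fo_structure R).

Lemma dimS_ge B k (Y : set ('I_k -> R)) y : countable B -> definable M B Y -> Y y ->
  dimt M B y <= dimS M Y.
Proof.
move=> cB dY Yy; have hlt : dimt M B y < k.+1 by rewrite ltnS dimt_le.
rewrite /dimS.
apply: (@leq_bigmax_cond _ (fun i : 'I_k.+1 => `[< exists B, countable B /\ definable M B Y /\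
          exists a, Y a /\ dimt M B a = i >]) (fun i => nat_of_ord i) (Ordinal hlt)).
by apply/asboolP; exists B; split => //; split => //; exists y.
Qed.

Lemma dimS_le k (Y : set ('I_k -> R)) : dimS M Y <= k.
Proof. by rewrite /dimS; apply/bigmax_leqP => i _; rewrite -ltnS ltn_ord. Qed.

Lemma dimS_attained k (Y : set ('I_k -> R)) : 0 < dimS M Y ->
  exists B, [/\ countable B, definable M B Y & exists a, Y a /\ dimt M B a = dimS M Y].
Proof.
rewrite /dimS.
set P := (fun i : 'I_k.+1 => `[< exists B, countable B /\ definable M B Y /\
          exists a, Y a /\ dimt M B a = i >]).
have [[i0 Pi0]|nP] := pselect (exists i, P i).
- have [i [/asboolP [B [cB [dB [a [Ya Ea]]]]] E]] := bigmax_attained (fun i => nat_of_ord i) Pi0.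
  by move=> _; exists B; split => //; exists a; rewrite Ea E.
- rewrite big_pred0 // => i; apply/negP => Pi; apply: nP; by exists i.
Qed.

Lemma dimt_le_dimS A k (Y : set ('I_k -> R)) y : definable M A Y -> Y y ->
  dimt M A y <= dimS M Y.
Proof.
move=> /definable_small [A0 [cA0 A0A dA0]] Yy.
exact: (@leq_trans _ _ _ (dimt_anti M y A0A) (dimS_ge cA0 dA0 Yy)).
Qed.

Variable hG : HGS_generic_ax M.

Lemma dimS_realize C k (Y : set ('I_k -> R)) y0 : countable C -> definable M C Y -> Y y0 ->
  exists y, Y y /\ dimt M C y = dimS M Y.
Proof.
move=> cC dY Yy0; case: (posnP (dimS M Y)) => [E|pos].
  exists y0; split => //; apply/eqP; rewrite E -leqn0 -E; exact: dimS_ge.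
have [B [cB dB [a [Ya Ea]]]] := dimS_attained pos.
have [a' [_ [Ya' Ea']]] := hG cB dB (conj Ya Ea) (countableU cB cC)
   (fun r (h : B r) => or_introl h) openT (I : setT a).
exists a'; split => //; apply/eqP; rewrite eqn_leq dimS_ge //= -Ea'.
by apply: (dimt_anti M) => r h; right.
Qed.

Lemma dimS_mono C k (X Y : set ('I_k -> R)) : countable C -> definable M C X ->
  Y `<=` X -> dimS M Y <= dimS M X.
Proof.
move=> cC dX YX; case: (posnP (dimS M Y)) => [->//|pos].
have [B [cB dB [a [Ya Ea]]]] := dimS_attained pos.
have [a' [_ [Ya' Ea']]] := hG cB dB (conj Ya Ea) (countableU cB cC)
   (fun r (h : B r) => or_introl h) openT (I : setT a).
rewrite -Ea'; apply: (dimS_ge (countableU cB cC)); last exact: YX.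
apply: definable_mono dX => r h; by right.
Qed.

End DimS.
Definition subst_c (R : Type) n m (c : 'I_m -> 'I_n + R) (y : 'I_n -> R) : 'I_m -> R :=
  fun t => match c t with inl j => y j | inr a => a end.

Section Fib.
Variable (R : Type) (M : fo_structure R).

Lemma Def_fiber A n m (Yf : set ('I_(1 + m) -> R)) (c : 'I_m -> 'I_n + R) (i : 'I_n) :
  (forall t a, c t = inr a -> A a) -> Def M A Yf ->
  Def M A [set y | Yf (catt (pt1 (y i)) (subst_c c y))].
Proof.
move=> cA hY.
pose c' (u : 'I_(1 + m)) : 'I_n + R := match split u with inl _ => inl i | inr t => c t end.
have c'A u a : c' u = inr a -> A a.
  by rewrite /c'; case: (split u) => [_ //|t]; exact: cA.
apply: Def_ext (Def_pre2 c'A hY) => y /=.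
have -> : (fun u => match c' u with inl j => y j | inr a => a end) =
          catt (pt1 (y i)) (subst_c c y); last by [].
by apply: funext => u; rewrite /c' /catt /subst_c; case: (split u).
Qed.

Lemma Def_bounded (r0 : R) A n m N (Yf : set ('I_(1 + m) -> R)) (c : 'I_m -> 'I_n + R) :
  (forall t a, c t = inr a -> A a) -> Def M A Yf ->
  Def M A [set y | exists f : 'I_N -> R,
    forall r, Yf (catt (pt1 r) (subst_c c y)) -> exists t, f t = r].
Proof.
move=> cA hY.
pose last : 'I_(n + N + 1) := rshift (n + N) ord0.
pose c'' (u : 'I_(1 + m)) : 'I_(n + N + 1) + R := match split u with
  | inl _ => inl last
  | inr t => match c t with inl j => inl (lshift 1 (lshift N j)) | inr a => inr a end end.
have c''A u a : c'' u = inr a -> A a.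
  rewrite /c''; case: (split u) => [_ //|t]; case E: (c t) => [//|a'] [<-]; exact: cA _ _ E.
have hG1 := Def_pre2 c''A hY.
have hG2 : Def M A [set z : 'I_(n + N + 1) -> R |
                    forall t : 'I_N, ~ [set z | z (lshift 1 (rshift n t)) = z last] z].
  apply: Def_bigcap => t; exact/Def_C/Def_eq.
have hE := Def_C (Def_ex r0 (Def_I hG1 hG2)).
apply: Def_ext (Def_ex r0 hE) => y /=; split.
- move=> [w hw]; exists w => r hr; apply: contrapT => nr; apply: hw.
  exists (pt1 r); split.
    have -> : (fun u => match c'' u with inl j => catt (catt y w) (pt1 r) j | inr a => a end)
       = catt (pt1 r) (subst_c c y); last by [].
    apply: funext => u; rewrite /c'' /catt /subst_c; case: (split u) => [u0|t].
      by rewrite /last (unsplitK (inr ord0)).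
    case: (c t) => [j|a] //; by rewrite (unsplitK (inl (lshift N j))) (unsplitK (inl j)).
  move=> t; rewrite /= /last cattR !cattL cattR => E; apply: nr; exists t; exact: E.
- move=> [w hw]; exists w; move=> [w1 [h1 h2]].
  have [t Et] : exists t, w t = w1 ord0.
    apply: hw; move: h1; congr Yf; apply: funext => u; rewrite /c'' /catt /subst_c.
    case: (split u) => [u0|t]; first by rewrite /last (unsplitK (inr ord0)).
    case: (c t) => [j|a] //; by rewrite (unsplitK (inl (lshift N j))) (unsplitK (inl j)).
  apply: (h2 t); rewrite /= /last cattR !cattL cattR -Et //.
Qed.

End Fib.
Lemma agree_cattE (R : Type) k m (y : 'I_k -> R) (q : 'I_m -> R) (e : nat -> R) :
  (forall u : 'I_(k + m), e u = catt y q u) <-> agree y q e.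
Proof.
split.
- move=> h; split => [i|j]; [by have := h (lshift m i); rewrite cattL|by have := h (rshift k j); rewrite cattR].
- move=> [h1 h2] u; rewrite /catt; case: splitP => [a ->|t ->]; [exact: h1|exact: h2].
Qed.

Lemma finite_funs (R : choiceType) (r0 : R) n (S : 'I_n -> set R) :
  (forall i, finite_set (S i)) -> finite_set [set a : 'I_n -> R | forall i, S i (a i)].
Proof.
move=> hS.
have : finite_set (\bigcup_(i in [set: 'I_n]) S i).
  by apply: bigcup_finite => //; exact: finite_finset.
move=> /finite_seqP [s Es].
pose g (c : {ffun 'I_n -> 'I_(size s)}) := fun i => nth r0 s (c i).
apply: sub_finite_set (finite_image g (@finite_finset _ [set: {ffun 'I_n -> 'I_(size s)}])).
move=> a ha.
have hin i : a i \in s.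
  have : (\bigcup_(i in [set: 'I_n]) S i) (a i) by exists i.
  by rewrite Es.
have hidx i : index (a i) s < size s by rewrite index_mem.
exists [ffun i => Ordinal (hidx i)] => //.
by apply: funext => i; rewrite /g ffunE /= nth_index.
Qed.

Definition piJ (R : Type) n d (jj : 'I_d -> 'I_n) (a : 'I_n -> R) : 'I_d -> R :=
  fun k => a (jj k).

Section Core.
Variable (R : topologicalType) (M : fo_structure R).
Hypothesis hex : acl_exchange M.
Hypothesis hinf : elim_exists_infty M.
Variable (r0 : R).
Variables (n d : nat) (A : set R) (x : 'I_n -> R) (J : {set 'I_n}) (jj : 'I_d -> 'I_n).
Hypothesis hJ : acl_indep M A x J.
Hypothesis hJd : #|J| = dimt M A x.
Hypothesis hjjS : forall j, j \in J -> exists k, jj k = j.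

Lemma coord_bound (i : 'I_n) : exists D : set ('I_n -> R), [/\ Def M A D, D x &
  forall b, exists S : set R, finite_set S /\
     forall a, D a -> piJ jj a = b -> S (a i)].
Proof.
case: (boolP (i \in J)) => iJ.
  exists setT; split => //; first exact: Def_setT.
  move=> b; have [k hk] := hjjS iJ; exists [set b k]; split; first exact: finite_set1.
  by move=> a _ <-; rewrite /piJ hk.
have := dimt_max_acl hex hJ hJd iJ.
move=> [Y [[phi [m [p [pA EY]]]] [fY Yx]]].
pose Yf : set ('I_(1 + m) -> R) :=
  [set z | forall e : nat -> R, (forall u : 'I_(1 + m), e u = z u) -> sat M e phi].
have dYf : definable M set0 Yf.
  exists phi, 0, (fun t => False_rect _ (I0_False t)); split; first by move=> t; case: (I0_False t).
  rewrite /Yf; apply/seteqP; split => z /= h e h1.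
    by move=> _; exact: h.
  by apply: h h1 (fun t => match I0_False t with end).
have YE r q : Yf (catt (pt1 r) q) <->
    (forall e : nat -> R, (forall i0 : 'I_1, e i0 = pt1 r i0) -> (forall j : 'I_m, e (1 + j) = q j) -> sat M e phi).
  split => h e.
    by move=> h1 h2; apply: h; apply/agree_cattE.
  by move=> /agree_cattE [h1 h2]; exact: h.
have YpE r : Y (pt1 r) <-> Yf (catt (pt1 r) p) by rewrite YE EY.
have dYfA : Def M A Yf by apply: definable_Def; exact: definable_mono dYf.
have [N hN] := hinf (definable_mono (fun r (h : set0 r) => I) dYf).
have hc t : exists s : 'I_n + R,
    match s with inl j => j \in J /\ x j = p t | inr a => A a /\ a = p t end.
  case: (pA t) => [Ap|[j /= jJ xj]]; [by exists (inr (p t))|by exists (inl j)].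
have [c hcP] := choice hc.
have cA t a : c t = inr a -> A a.
  by move: (hcP t); case: (c t) => // a' [Aa _] [<-].
have pax : subst_c c x = p.
  by apply: funext => t; rewrite /subst_c; move: (hcP t); case: (c t) => [j [_ ->]|a [_ ->]].
exists ([set y | Yf (catt (pt1 (y i)) (subst_c c y))] `&`
        [set y | exists f : 'I_N -> R, forall r, Yf (catt (pt1 r) (subst_c c y)) -> exists t, f t = r]).
split.
- apply: Def_I; first exact: Def_fiber cA dYfA.
  exact: (Def_bounded r0) cA dYfA.
- split; rewrite /= pax; first by rewrite -YpE.
  have fin : finite_set [set r | Yf (catt (pt1 r) p)].
    apply: sub_finite_set (finite_image (fun z => z ord0) fY) => r /YpE Yr.
    by exists (pt1 r).
  have [f hf] := hN p fin; exists f => r hr.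
  by have [t _ <-] := hf r hr; exists t.
- move=> b; have [[a0 [[_ [f hf]] hb]]|nex] :=
      pselect (exists a0, ([set y | Yf (catt (pt1 (y i)) (subst_c c y))] `&`
        [set y | exists f : 'I_N -> R, forall r, Yf (catt (pt1 r) (subst_c c y)) -> exists t, f t = r]) a0
        /\ piJ jj a0 = b).
  + exists (range f); split; first by apply: finite_image; exact: finite_finset.
    move=> a [ha _] hab.
    have E : subst_c c a = subst_c c a0.
      apply: funext => t; rewrite /subst_c; move: (hcP t); case: (c t) => [j [jJ _]|//].
      have [k <-] := hjjS jJ.
      by change (piJ jj a k = piJ jj a0 k); rewrite hab hb.
    have ha' : Yf (catt (pt1 (a i)) (subst_c c a0)) by rewrite -E.
    have [t <-] := hf _ ha'; by exists t.
  + exists set0; split; first exact: finite_set0.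
    by move=> a Da hab; case: nex; exists a.
Qed.

Lemma X0_exists (X : set ('I_n -> R)) : Def M A X -> X x ->
  exists X0 : set ('I_n -> R), [/\ Def M A X0, X0 `<=` X, X0 x &
    forall b, finite_set [set a | X0 a /\ piJ jj a = b]].
Proof.
move=> hX Xx; have [Dc hD] := choice coord_bound.
exists (X `&` [set a | forall i, Dc i a]); split.
- apply: Def_I hX _; apply: Def_bigcap => i; by case: (hD i).
- by move=> a [].
- by split => // i; case: (hD i).
- move=> b.
  have hS i : exists S : set R, finite_set S /\ forall a, Dc i a -> piJ jj a = b -> S (a i).
    by case: (hD i) => _ _; apply.
  have [Sc hSc] := choice hS.
  apply: sub_finite_set (finite_funs r0 (fun i => (hSc i).1)).
  by move=> a [[Xa hDa] hab] i; apply: (hSc i).2.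
Qed.

End Core.
Section Top.
Variable (R : topologicalType).

Lemma box_nbhs n (x : 'I_n -> R) (O : set ('I_n -> R)) : nbhs x O ->
  exists Oc : 'I_n -> set R, (forall i, open (Oc i) /\ Oc i (x i)) /\
     [set y | forall i, Oc i (y i)] `<=` O.
Proof.
pose F : set_system ('I_n -> R) := [set O | exists Oc : 'I_n -> set R,
   (forall i, open (Oc i) /\ Oc i (x i)) /\ [set y | forall i, Oc i (y i)] `<=` O].
have FF : Filter F.
  split.
  - exists (fun _ => setT); split => // i; split => //; exact: openT.
  - move=> P Q [Oc [h1 h2]] [Oc' [h1' h2']]; exists (fun i => Oc i `&` Oc' i); split.
      move=> i; split; [apply: openI; [exact: (h1 i).1|exact: (h1' i).1]|split; [exact: (h1 i).2|exact: (h1' i).2]].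
    by move=> y hy; split; [apply: h2 => i; exact: (hy i).1|apply: h2' => i; exact: (hy i).2].
  - by move=> P Q PQ [Oc [h1 h2]]; exists Oc; split => // y /h2 /PQ.
have : F --> (x : product_topology_def (fun _ : 'I_n => R)).
  apply/cvg_sup => i.
  have surj : (fun f : 'I_n -> R => f i) @` setT = setT.
    apply/seteqP; split => // r _; exists (fun _ => r) => //.
  apply/(cvg_image _ FF surj) => N /= hN.
  have [B [oB Bx BN]] : exists B, [/\ open B, B (x i) & B `<=` N].
    by move: hN; rewrite nbhsE => -[B [oB Bx] BN]; exists B.
  exists [set y | N (y i)].
    exists (fun j => if j == i then B else setT); split.
      move=> j; case: eqP => [->|_]; [done|split => //; exact: openT].
    by move=> y /(_ i); rewrite eqxx => /BN.
  apply/seteqP; split => [_ [y hy <-] //|r Nr]; by exists (fun _ => r).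
move=> hF /hF [Oc h]; by exists Oc.
Qed.
End Top.
Section Top2.
Variable (R : topologicalType).

Lemma coord_continuous k (i : 'I_k) : continuous (fun y : 'I_k -> R => y i).
Proof. exact: (@proj_continuous _ (fun _ : 'I_k => R) i). Qed.

Lemma cont_into (T : topologicalType) k (g : T -> ('I_k -> R)) :
  (forall i, continuous (fun t => g t i)) -> continuous g.
Proof.
move=> hg t O /box_nbhs [Oc [hO sub]].
have : \forall s \near t, forall i, Oc i (g s i).
  apply: filter_forall => i; apply: (hg i t); apply: open_nbhs_nbhs; split; [exact: (hO i).1|exact: (hO i).2].
by apply: filterS => s hs; apply: sub.
Qed.

Lemma reindex_continuous k l (h : 'I_k -> 'I_l) :
  continuous (fun y : 'I_l -> R => (fun i => y (h i)) : 'I_k -> R).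
Proof. by apply: cont_into => i; exact: coord_continuous. Qed.

Lemma box_open k (Oc : 'I_k -> set R) : (forall i, open (Oc i)) ->
  open [set y : 'I_k -> R | forall i, Oc i (y i)].
Proof.
move=> hO; rewrite openE => y hy; rewrite /interior.
have := @filter_forall _ _ (fun i (z : 'I_k -> R) => Oc i (z i)) (nbhs y) _.
apply => i /=; apply: (@proj_continuous _ (fun _ : 'I_k => R) i y); apply: open_nbhs_nbhs; split; [exact: hO|exact: hy].
Qed.

End Top2.
Lemma definable_setT (R : Type) (M : fo_structure R) A k :
  definable M A [set: 'I_k -> R].
Proof.
exists (@FEq _ (@fo_ar R M) 0 0), 0, (fun t => False_rect _ (I0_False t)); split.
  by move=> t; case: (I0_False t).
by apply/seteqP; split => // z _ e _ _ /=.
Qed.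

Lemma lman_dim0 (R : topologicalType) (M : fo_structure R)
  (S : forall n : nat, set (set ('I_n -> R))) (HS : lore M S)
  (A : set R) (X : set ('I_0 -> R)) (x : 'I_0 -> R)
  (HX : definable M A X) (Xx : X x) : lman_point M S X x.
Proof.
move: HS => [_ [_ [_ [_ [_ [_ [_ [_ [_ Siv]]]]]]]]].
have hd0 : dimS M X = 0 by apply/eqP; rewrite -leqn0; exact: (dimS_le M X).
rewrite /lman_point; split => //.
move: (dimS M X) hd0 => dd hd; subst dd.
pose f := fun (_ : 'I_0 -> R) => (fun t : 'I_0 => False_rect R (I0_False t)).
have e0 (a b : 'I_0 -> R) : a = b by apply: funext => t; case: (I0_False t).
exists X, setT, f; split.
- by apply: definable_mono HX.
- by split => //; exists setT; split; [exact: openT|rewrite setIT].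
- exact: openT.
- split; first by apply/seteqP; split => // w _; exists x => //; exact: e0.
  split; first by apply: continuous_subspaceT; exact: cst_continuous.
  exists (fun _ => x); split; first by move=> a _; exact: e0.
  by apply: continuous_subspaceT; exact: cst_continuous.
- have [X' [_ SX' [V [oV EX']] hX']] := Siv _ A [set: 'I_(0 + 0) -> R] (definable_setT M A _)
    (ex_intro _ (catt x (f x)) I).
  have gT : graph X f = setT.
    by apply/seteqP; split => // z _; exists x; split => //; exact: e0.
  have X'T : X' = setT.
    case: hX' => [h|h]; last first.
      have := dimS_le M [set: 'I_(0 + 0) -> R]; rewrite leqn0 => /eqP E.
      by rewrite E ltn0 in h.
    apply/seteqP; split => // z _; apply: contrapT => nz.
    have : (setT `\` X') z by [].
    by rewrite h.
  by rewrite gT -X'T.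
Qed.
Theorem lemma2p17 (R : topologicalType) (M : fo_structure R)
  (S : forall n : nat, set (set ('I_n -> R)))
  (HM : t_minimal M) (HS : lore M S)
  (n : nat) (A : set R) (X : set ('I_n -> R)) (x : 'I_n -> R)
  (HX : definable M A X) (Hx : generic M A X x) :
  lman_point M S X x.
Proof.
have [n0|npos] := posnP n.
  by subst n; exact: (lman_dim0 HS HX Hx.1).
have r0 : R := x (Ordinal npos).
move: HM => [[hH [[hex hinf] hsat] hcl hgen hhom] [[mB [Bb [dB [oB bB]]]] noiso]].
move: (HS) => [_ [_ [_ [_ [_ [_ [_ [Sopen [_ Siv]]]]]]]]].
move: Hx => [Xx hdx].
set d := dimS M X in hdx *.
have [J [hJ hJd]] := dimt_attained M A x.
have cJ : #|J| = d by rewrite hJd hdx.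
pose jj (k : 'I_d) : 'I_n := enum_val (cast_ord (esym cJ) k).
have hjjJ k : jj k \in J by exact: enum_valP.
have hjj_inj : injective jj.
  by move=> k k' /enum_val_inj /cast_ord_inj.
have hjjS j : j \in J -> exists k, jj k = j.
  move=> jJ; exists (cast_ord cJ (enum_rank_in jJ j)).
  by rewrite /jj cast_ordK enum_rankK_in.
pose pi : ('I_n -> R) -> ('I_d -> R) := piJ jj.
have HXd : Def M A X := definable_Def HX.
have [X0 [dX0 X0X X0x hfib]] := X0_exists hex hinf r0 hJ hJd hjjS HXd Xx.
have dX0' : definable M A X0 := Def_definable r0 dX0.
have [A0 [cA0 A0A dXA0]] := definable_small HX.
pose Z := graph X0 pi.
have dZ : Def M A Z.
  pose c (i : 'I_n) : 'I_(n + d) + R := inl (lshift d i).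
  have cA : forall i a, c i = inr a -> A a by [].
  have hc1 := Def_pre2 cA dX0.
  have hc2 : Def M A [set z : 'I_(n + d) -> R | forall k, z (rshift n k) = z (lshift d (jj k))].
    apply: Def_bigcap => k; exact: Def_eq.
  apply: Def_ext (Def_I hc1 hc2) => z; split.
  - move=> [/= h1 h2]; exists (fun i => z (lshift d i)); split => //.
    rewrite {1}(catt_eta z); congr catt; apply: funext => k; exact: h2.
  - move=> [a [X0a ->]]; split => /=.
      by have -> : (fun i => catt a (pi a) (lshift d i)) = a by apply: funext => i; rewrite cattL.
    by move=> k; rewrite cattR cattL.
have dZ' : definable M A Z := Def_definable r0 dZ.
have Zx : Z (catt x (pi x)) by exists x.
have hX0d : dimS M X0 = d.
  apply/eqP; rewrite eqn_leq (dimS_mono hgen cA0 dXA0 X0X) /= -hdx.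
  exact: dimt_le_dimS dX0' X0x.
have hpix : d <= dimt M A (pi x).
  case: (posnP d) => [d0|dpos]; first by rewrite {1}d0.
  pose rho (i : 'I_n) : 'I_d := odflt (Ordinal dpos) [pick k | jj k == i].
  have hrho i : i \in J -> jj (rho i) = i.
    move=> iJ; rewrite /rho; case: pickP => [k /eqP //|h].
    by have [k hk] := hjjS _ iJ; move: (h k); rewrite hk eqxx.
  have hinj : {in J &, injective rho}.
    by move=> i i' iJ i'J E; rewrite -(hrho i iJ) -(hrho i' i'J) E.
  have [hind hcard] := indep_transfer (b := pi x) (rho := rho) (fun i iJ => esym (f_equal x (hrho i iJ)))
     hinj hJ.
  by move: (dimt_indep hind); rewrite hcard cJ.
have hYd : dimS M [set: 'I_d -> R] = d.
  apply/eqP; rewrite eqn_leq dimS_le /=.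
  apply: leq_trans hpix _; apply: dimt_le_dimS (I : setT (pi x)).
  exact: definable_setT.
have hcx : d <= dimt M A (catt x (pi x)).
  have [hind hcard] := indep_transfer (b := catt x (pi x)) (rho := lshift d)
     (fun i _ => esym (cattL _ _ i)) (fun i i' _ _ => @lshift_inj n d i i') hJ.
  by move: (dimt_indep hind); rewrite hcard cJ.
have hZd : dimS M Z = d.
  apply/eqP; rewrite eqn_leq; apply/andP; split; last first.
    by apply: leq_trans hcx _; exact: dimt_le_dimS dZ' Zx.
  have [A2 [cA2 A2A dZA2]] := definable_small dZ'.
  have [A3 [cA3 A3A dX0A3]] := definable_small dX0'.
  have cC := countableU cA2 cA3.
  have [z [[a [X0a ->]] hz]] := dimS_realize hgen cC (definable_mono (fun r h => or_introl h) dZA2) Zx.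
  rewrite -hz.
  have [J' [hJ' hJ'd]] := dimt_attained M (A2 `|` A3) (catt a (pi a)).
  pose rho (u : 'I_(n + d)) : 'I_n := match split u with inl i => i | inr k => jj k end.
  have hrho u : catt a (pi a) u = a (rho u).
    by rewrite /rho /catt; case: (split u).
  have hinj : {in J' &, injective rho}.
    by move=> u u' uJ u'J E; apply: (indep_inj hJ' uJ u'J); rewrite !hrho E.
  have [hind hcard] := indep_transfer (rho := rho) (fun u _ => hrho u) hinj hJ'.
  rewrite -hJ'd -hcard; apply: leq_trans (dimt_indep hind) _.
  have := dimS_ge cC (definable_mono (fun r h => or_intror h) dX0A3) X0a.
  by rewrite hX0d.
have genZ : generic M A Z (catt x (pi x)).
  split => //; apply/eqP; rewrite eqn_leq; apply/andP; split.
    exact: dimt_le_dimS dZ' Zx.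
  exact: (leq_trans (eq_leq hZd) hcx).
have fin1 : forall a, finite_set [set b | Z (catt a b)].
  move=> a; apply: sub_finite_set (finite_set1 (pi a)) => b [a' [_ E]].
  by have [-> ->] := catt_inj E.
have fin2 : forall b, finite_set [set a | Z (catt a b)].
  move=> b; apply: sub_finite_set (hfib b) => a [a' [X0a' E]].
  by have [-> ->] := catt_inj E.
have ZXY : Z `<=` prodS X0 [set: 'I_d -> R].
  by move=> z [a [X0a ->]]; exists a, (pi a).
have [U [V [f [[oU Ux] [oV Vpx] hhomeo hgraph]]]] :=
  hhom n d A X0 setT Z dX0' (definable_setT M A d) dZ' ZXY
    (etrans hX0d (esym hYd)) (etrans hYd (esym hZd)) fin1 fin2 x (pi x) genZ.
have fpi a : X0 a -> U a -> f a = pi a.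
  move=> X0a Ua.
  have : graph (X0 `&` U) f (catt a (f a)) by exists a.
  rewrite -hgraph => -[[a' [_ E]] _].
  by have [<- ->] := catt_inj E.
have [Z' [dZ'' SZ' [O' [oO' EZ']] hZ']] := Siv (n + d) A Z dZ' (ex_intro _ _ Zx).
have Z'x : Z' (catt x (pi x)).
  apply: contrapT => nZ'.
  have hD : (Z `\` Z') (catt x (pi x)) by split.
  case: hZ' => [E|hlt]; first by rewrite E in hD.
  have dD : definable M A (Z `\` Z') := Def_definable r0 (Def_D dZ (definable_Def dZ'')).
  have h := dimt_le_dimS dD hD; rewrite genZ.2 in h.
  by move: (leq_ltn_trans h hlt); rewrite ltnn.
have [N0 [nN0 hN0]] : exists N0, nbhs x N0 /\ forall a, X a -> N0 a -> X0 a.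
  pose Yc := X `\` X0.
  have dYc : definable M A Yc := Def_definable r0 (Def_D HXd dX0).
  have nYx : ~ closure Yc x.
    move=> cl.
    have h1 : closure (closure Yc `\` Yc) x.
      by apply: subset_closure; split => // -[_ nX0]; exact: nX0 X0x.
    have h3 := hcl n A Yc x dYc h1.
    have h2 := dimS_mono hgen cA0 dXA0 (fun a (h : Yc a) => h.1).
    by move: (leq_trans h3 h2); rewrite hdx /d ltnn.
  have : exists B, nbhs x B /\ ~ (Yc `&` B !=set0).
    apply: contrapT => nh; apply: nYx => B hB; apply: contrapT => nn; apply: nh; by exists B.
  move=> [B [hB nY]]; exists B; split => // a Xa Ba; apply: contrapT => nX0a; apply: nY.
  by exists a.
pose h' (u : 'I_(n + d)) : 'I_n := match split u with inl i => i | inr k => jj k end.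
have hcont : continuous (fun y : 'I_n -> R => catt y (pi y)).
  have -> : (fun y : 'I_n -> R => catt y (pi y)) =
            (fun y => (fun u => y (h' u)) : 'I_(n + d) -> R).
    by apply: funext => y; apply: funext => u; rewrite /catt /h'; case: (split u).
  exact: reindex_continuous.
have nN1 : nbhs x [set y | O' (catt y (pi y))].
  apply: (hcont x); apply: open_nbhs_nbhs; split => //.
  by move: Z'x; rewrite EZ' => -[].
have nO : nbhs x (U `&` N0 `&` [set y | O' (catt y (pi y))]).
  apply: filterI => //; apply: filterI => //; apply: open_nbhs_nbhs; by split.
have [Oc [hOc subOc]] := box_nbhs nO.
have hb i : exists b : 'I_mB -> R,
    Bb (catt (pt1 (x i)) b) /\ [set r' | Bb (catt (pt1 r') b)] `<=` Oc i.
  exact: bB (hOc i).1 (hOc i).2.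
have [bc hbc] := choice hb.
pose Box := [set y : 'I_n -> R | forall i, Bb (catt (pt1 (y i)) (bc i))].
have oBox : open Box.
  exact: (box_open (Oc := fun i => [set r | Bb (catt (pt1 r) (bc i))]) (fun i => oB (bc i))).
have Boxx : Box x by move=> i; exact: (hbc i).1.
have BoxO : Box `<=` U `&` N0 `&` [set y | O' (catt y (pi y))].
  by move=> y hy; apply: subOc => i; exact: (hbc i).2 _ (hy i).
have dBox : Def M setT Box.
  apply: Def_bigcap => i.
  pose c (u : 'I_(1 + mB)) : 'I_n + R := match split u with inl _ => inl i | inr t => inr (bc i t) end.
  have cA : forall u a, c u = inr a -> setT a by [].
  have dBT : Def M setT Bb := definable_Def (definable_mono (fun r (h : set0 r) => I) dB).
  apply: Def_ext (Def_pre2 cA dBT) => y /=.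
  have -> : (fun u => match c u with inl j => y j | inr a => a end) = catt (pt1 (y i)) (bc i);
    last by [].
  by apply: funext => u; rewrite /c /catt; case: (split u).
have hUf a : (X `&` Box) a -> [/\ X0 a, U a & O' (catt a (pi a))].
  by move=> [Xa Ba]; have [[Ua N0a] O'a] := BoxO a Ba; split => //; exact: hN0 a Xa N0a.
move: hhomeo => [fim [fcont [g [gf gcont]]]].
pose W := pi @` (X `&` Box).
have EW : W = V `&` g @^-1` Box.
  apply/seteqP; split.
  - move=> w [a Ua <-]; have [X0a Ua' _] := hUf a Ua.
    rewrite -fpi //; split.
      have : (setT `&` V) (f a) by rewrite -fim; exists a.
      by case.
    by rewrite /= gf //; case: Ua.
  - move=> w [Vw Bgw]; have : (f @` (X0 `&` U)) w by rewrite fim.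
    move=> [a [X0a Ua] fa].
    have ga : g w = a by rewrite -fa gf.
    exists a; last by rewrite -fpi.
    by split; [exact: X0X|rewrite -ga].
have gin : {in V, continuous g}.
  by rewrite -continuous_open_subspace //; rewrite setTI in gcont.
have oW : open W by rewrite EW; exact: (continuous_inP g oV).1 gin Box oBox.
pose Q := [set z : 'I_(n + d) -> R | Box (fun i => z (lshift d i))].
have lpE a : (fun i => catt a (pi a) (lshift d i)) = a by apply: funext => i; rewrite cattL.
have EG : graph (X `&` Box) pi = Z' `&` Q.
  apply/seteqP; split.
  - move=> z [a [Ua ->]]; have [X0a _ O'a] := hUf a Ua; split.
      by rewrite EZ'; split => //; exists a.
    by rewrite /Q /= lpE; case: Ua.
  - move=> z [Z'z Qz]; move: Z'z; rewrite EZ' => -[[a [X0a E]] _]; subst z.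
    exists a; split => //; split; first exact: X0X.
    by move: Qz; rewrite /Q /= lpE.
have dQ : Def M setT Q.
  pose c (i : 'I_n) : 'I_(n + d) + R := inl (lshift d i).
  have cA : forall i a, c i = inr a -> setT a by [].
  exact: Def_pre2 cA dBox.
have oQ : open Q.
  have h := (@continuousP _ _ (fun y : 'I_(n + d) -> R => (fun i => y (lshift d i)) : 'I_n -> R)).1
    (@reindex_continuous R n (n + d) (lshift d)) Box oBox.
  exact: h.
rewrite /lman_point; split => //.
exists (X `&` Box), W, pi; split.
- apply: (Def_definable r0); apply: Def_I; [exact: Def_mono HXd|exact: dBox].
- by split; [exists Box|split].
- exact: oW.
- split => //; split; first by apply: continuous_subspaceT; exact: reindex_continuous.
  exists g; split.
    by move=> a Ua; have [X0a Ua' _] := hUf a Ua; rewrite -fpi //; apply: gf.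
  by apply: continuous_subspaceW gcont; rewrite EW => w [Vw _].
- rewrite EG; apply: (Sopen _ Z'); first exact: SZ'.
    apply: (Def_definable r0); apply: Def_I dQ.
    exact: Def_mono (definable_Def dZ'').
  by exists Q.
Qed.
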